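(* Let $m,n\geq 0$ be integers. Then \[ \sum_{k=1}^{n}\frac{(q/z;q)_{k}(z;q)_{n-k}(z;q)_m}{(q;q)_k (q;q)_{n-k}(q^k;q)_{m+1}}q^{mk}z^k -\sum_{k=1}^{m}\frac{(q/z;q)_{k}(z;q)_{m-k}(z;q)_n}{(q;q)_k (q;q)_{m-k}(q^k;q)_{n+1}}q^{nk}z^k \] \[ =\frac{(1-zq^{-1})(z;q)_m(z;q)_n}{(q;q)_{m}(q;q)_{n}}\left(\sum_{k=1}^m\frac{q^k}{(1-zq^{k-1})(1-q^k)}-\sum_{k=1}^n\frac{q^k}{(1-zq^{k-1})(1-q^k)}\right). \]
   Context: For $N\geq 0$, $(x;q)_N=(1-x)(1-xq)\cdots(1-xq^{N-1})$ (with $(x;q)_0=1$). The identity is one of rational functions in $q$ and $z$. *)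

(* Defs.v *)
From HB Require Import structures.
From mathcomp Require Import all_boot all_order all_algebra.
Set Implicit Arguments. Unset Strict Implicit. Unset Printing Implicit Defensive.
Import GRing.Theory.
Local Open Scope ring_scope.

Definition qpoch (R : pzRingType) (x q : R) (N : nat) : R :=
  \prod_(i < N) (1 - x * q ^+ i).

Definition QQqz := {fraction {poly {poly rat}}}.

Definition qv : QQqz := tofrac ('X : {poly {poly rat}}).
Definition zv : QQqz := tofrac (('X : {poly rat})%:P : {poly {poly rat}}).

(* Main.v *)
Require Import Defs.
From HB Require Import structures.
From mathcomp Require Import all_boot all_order all_algebra.
From mathcomp Require Import ring.
Import GRing.Theory.
Local Open Scope ring_scope.

Section QId.
Variable F : fieldType.
Variables q z : F.
Hypothesis Hmon : forall a b c d : nat, q ^+ a * z ^+ b = q ^+ c * z ^+ d -> a = c /\ b = d.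

Lemma mono_neq a b c d : (a != c) || (b != d) -> q ^+ a * z ^+ b != q ^+ c * z ^+ d.
Proof. move=> H; apply/eqP=> /Hmon [E1 E2]; move: H; by rewrite E1 E2 !eqxx. Qed.

Lemma q0 : q != 0.
Proof. apply/eqP=> E; have := mono_neq 1 0 2 0 isT; by rewrite E !expr0 !mulr1 expr1 expr2 mul0r eqxx. Qed.

Lemma z0 : z != 0.
Proof. apply/eqP=> E; have := mono_neq 0 1 0 2 isT; by rewrite E !expr0 !mul1r expr1 expr2 mul0r eqxx. Qed.

Lemma qX0 k : q ^+ k != 0. Proof. exact: expf_neq0 q0. Qed.
Lemma zX0 k : z ^+ k != 0. Proof. exact: expf_neq0 z0. Qed.

Lemma mono_sub a b c d : (a != c) || (b != d) -> q ^+ a * z ^+ b - q ^+ c * z ^+ d != 0.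
Proof. by move=> H; rewrite subr_eq0 mono_neq. Qed.

Lemma nz_q k : (0 < k)%N -> 1 - q ^+ k != 0.
Proof.
move=> Hk; have := mono_sub 0 0 k 0; rewrite !expr0 !mulr1; apply.
by rewrite eq_sym -lt0n Hk.
Qed.

Lemma nz_zq k : 1 - z * q ^+ k != 0.
Proof. have := mono_sub 0 0 k 1 (orbT _); by rewrite !expr0 !mulr1 expr1 mulrC. Qed.

Lemma nz_z : 1 - z != 0.
Proof. by have := nz_zq 0; rewrite expr0 mulr1. Qed.

Lemma nz_qzq k : 1 - q / z * q ^+ k != 0.
Proof.
have H := mono_sub 0 1 k.+1 0 isT; move: H; rewrite !expr0 !mulr1 expr1 mul1r.
move=> H; have E : 1 - q / z * q ^+ k = (z - q ^+ k.+1) / z.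
  by rewrite exprS; field; exact: z0.
by rewrite E mulf_neq0 // invr_eq0 z0.
Qed.

Lemma nz_qq k l : k != l -> 1 - q ^+ k / q ^+ l != 0.
Proof.
move=> H; have E : 1 - q ^+ k / q ^+ l = (q ^+ l * z ^+ 0 - q ^+ k * z ^+ 0) / q ^+ l.
  rewrite !expr0 !mulr1; field; exact: qX0.
rewrite E mulf_neq0 ?invr_eq0 ?qX0 // mono_sub //; by rewrite eq_sym H.
Qed.

Lemma nz_zqq k l : 1 - z * q ^+ k / q ^+ l != 0.
Proof.
have E : 1 - z * q ^+ k / q ^+ l = (q ^+ l * z ^+ 0 - q ^+ k * z ^+ 1) / q ^+ l.
  rewrite !expr0 expr1 !mulr1; field; exact: qX0.
by rewrite E mulf_neq0 ?invr_eq0 ?qX0 // (mono_sub l 0 k 1 (orbT _)).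
Qed.

Local Notation P x N := (qpoch x q N).

Lemma qp0 x : P x 0 = 1. Proof. by rewrite /qpoch big_ord0. Qed.
Lemma qpS x N : P x N.+1 = P x N * (1 - x * q ^+ N).
Proof. by rewrite /qpoch big_ord_recr. Qed.
Lemma qpSl x N : P x N.+1 = (1 - x) * P (x * q) N.
Proof.
rewrite /qpoch big_ord_recl /= expr0 mulr1; congr (_ * _).
by apply: eq_bigr => i _; rewrite /bump /= add1n exprS mulrA.
Qed.
Lemma qpD x a b : P x (a + b)%N = P x a * P (x * q ^+ a) b.
Proof.
elim: b => [|b IH]; first by rewrite addn0 qp0 mulr1.
by rewrite addnS !qpS IH -mulrA -mulrA exprD mulrA.
Qed.

Lemma qp_neq0 x N : (forall i, (i < N)%N -> 1 - x * q ^+ i != 0) -> P x N != 0.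
Proof.
move=> H; rewrite /qpoch; apply/prodf_neq0 => i _; exact: H.
Qed.

Lemma qpq_neq0 N : P q N != 0.
Proof. apply: qp_neq0 => i _; rewrite -exprS; exact: nz_q. Qed.
Lemma qpz_neq0 N : P z N != 0.
Proof. apply: qp_neq0 => i _; exact: nz_zq. Qed.
Lemma qpqz_neq0 N : P (q / z) N != 0.
Proof. apply: qp_neq0 => i _; exact: nz_qzq. Qed.
Lemma qpqk_neq0 k N : (0 < k)%N -> P (q ^+ k) N != 0.
Proof. move=> Hk; apply: qp_neq0 => i _; rewrite -exprD; apply: nz_q; by rewrite addn_gt0 Hk. Qed.
Lemma qpzqk_neq0 k N : P (z * q ^+ k) N != 0.
Proof. apply: qp_neq0 => i _; rewrite -mulrA -exprD; exact: nz_zq. Qed.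

Lemma qp_refl N : forall x : F, x != 0 -> P (x / q ^+ N) N = (- x) ^+ N / q ^+ 'C(N.+1, 2) * P (q / x) N.
Proof.
elim: N => [|N IH] x Hx.
  by rewrite !qp0 expr0 (_ : 'C(1, 2) = 0%N) // expr0 divr1 mulr1.
rewrite [LHS]qpSl.
have -> : x / q ^+ N.+1 * q = x / q ^+ N by rewrite exprS; field; rewrite q0 qX0.
rewrite IH // qpS.
rewrite (binS N.+1) bin1 exprD.
have E : q / x * q ^+ N = q ^+ N.+1 / x by rewrite exprS; field.
rewrite E; rewrite !exprS; field.
by rewrite Hx q0 !qX0.
Qed.


Lemma sign_neq0 (j : nat) : (-1 : F) ^+ j != 0.
Proof. by rewrite expf_neq0 // oppr_eq0 oner_eq0. Qed.

Ltac nz1 := first [ exact: q0 | exact: z0 | exact: qX0 | exact: zX0 | exact: sign_neq0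
  | exact: qpq_neq0 | exact: qpz_neq0 | exact: qpqz_neq0 | exact: nz_zq | exact: nz_qzq | exact: nz_zqq
  | (apply: nz_q; done) | (rewrite -exprS; apply: nz_q; done) | (apply: nz_qq; done) | (apply: qpqk_neq0; done) | exact: qpzqk_neq0
  | exact: oner_neq0 | exact: nz_z | assumption | (rewrite -!exprS; apply: qpqk_neq0; done)
  | (rewrite -?mulrA -?exprD -?exprS -?exprD -?exprS; first [apply: nz_q; done | exact: nz_zq])
  | (rewrite -oppr_eq0 opprB; apply: nz_q; done) | (rewrite -oppr_eq0 opprB -exprS; apply: nz_q; done) | (rewrite -exprD; nz1) | (by rewrite oppr_eq0 oner_eq0)
  | (apply: mulf_neq0; nz1) | (rewrite invr_eq0; nz1) | (apply: expf_neq0; nz1) ].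
Ltac nz := repeat (apply/andP; split); nz1.

Definition wh n i := P (q / z) i * P z (n - i) * z ^+ i * P q n / (P q i * P q (n - i) * P z n).
Definition Psi n y := P q n * P (z * y) n / (P z n * P y n.+1).

Lemma wh0 n : wh n 0 = 1.
Proof. rewrite /wh subn0 !qp0 expr0 !mul1r; field; nz. Qed.

Lemma wh_succ n i : (i <= n)%N -> wh n.+1 i = wh n i * ((1 - q ^+ n.+1) * (1 - z * q ^+ (n - i))) / ((1 - q ^+ (n - i).+1) * (1 - z * q ^+ n)).
Proof. move=> Hi; rewrite /wh subSn // !qpS; move: (n - i)%N => k; rewrite !exprS; field; nz. Qed.

Lemma L2_term n i y : (i <= n)%N -> 1 - y * q ^+ i != 0 -> 1 - y * q ^+ n.+1 != 0 ->
  wh n.+1 i / (1 - y * q ^+ i) =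
  wh n i * ((1 - q ^+ n.+1) * (1 - z * y * q ^+ n) / ((1 - z * q ^+ n) * (1 - y * q ^+ n.+1))
              / (1 - y * q ^+ i)
           - (1 - q ^+ n.+1) * (q ^+ n.+1 - z * q ^+ n) / ((1 - z * q ^+ n) * (1 - y * q ^+ n.+1) * q ^+ n.+1)
              / (1 - (q ^+ n.+1)^-1 * q ^+ i)).
Proof.
move=> Hi Hy1 Hy2; rewrite wh_succ //.
have Hn : q ^+ n = q ^+ (n - i) * q ^+ i by rewrite -exprD subnK.
have E : 1 - (q ^+ n.+1)^-1 * q ^+ i = (q ^+ (n - i) * q - 1) / (q ^+ (n - i) * q).
  rewrite exprS Hn; field; nz.
rewrite E.
have H1 : q ^+ (n - i) * q - 1 != 0.
  by rewrite -exprSr -oppr_eq0 opprB nz_q.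
move: Hy2; rewrite !exprS Hn => Hy2.
move: (n - i)%N (wh n i) H1 Hy2 => k w H1 Hy2.
field; nz.
Qed.

Lemma L2 n : forall y, (forall k, (k <= n)%N -> 1 - y * q ^+ k != 0) ->
  \sum_(i < n.+1) wh n i / (1 - y * q ^+ i) = Psi n y.
Proof.
elim: n => [|n IH] y Hy.
  have H0 := Hy 0%N isT; rewrite expr0 mulr1 in H0.
  rewrite big_ord1 wh0 /Psi !qp0 qpS qp0 expr0 mulr1; field; nz.
rewrite big_ord_recr /=.
set y' := (q ^+ n.+1)^-1.
set al := (1 - q ^+ n.+1) * (1 - z * y * q ^+ n) / ((1 - z * q ^+ n) * (1 - y * q ^+ n.+1)).
set be := (1 - q ^+ n.+1) * (q ^+ n.+1 - z * q ^+ n) / ((1 - z * q ^+ n) * (1 - y * q ^+ n.+1) * q ^+ n.+1).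
have Hyn : 1 - y * q ^+ n.+1 != 0 by apply: Hy.
have step : \sum_(i < n.+1) wh n.+1 i / (1 - y * q ^+ i) =
   al * (\sum_(i < n.+1) wh n i / (1 - y * q ^+ i)) - be * (\sum_(i < n.+1) wh n i / (1 - y' * q ^+ i)).
  rewrite !mulr_sumr -sumrB; apply: eq_bigr => i _.
  rewrite L2_term //; first by rewrite /al /be /y'; ring.
  - by rewrite -ltnS ltn_ord.
  - apply: Hy; by rewrite -ltnS ltnW // ltnS ltn_ord.
rewrite step IH; last by move=> k Hk; apply: Hy; rewrite ltnW.
rewrite IH; last first.
  move=> k Hk; rewrite /y' mulrC; apply: nz_qq; by rewrite neq_ltn ltnS Hk.
rewrite /Psi /wh subnn !qp0.
have -> : z * y' = (z / q) / q ^+ n by rewrite /y' exprS; field; nz.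
have -> : y' = 1 / q ^+ n.+1 by rewrite /y' div1r.
rewrite (qp_refl n (z / q)); last by rewrite mulf_neq0 ?invr_eq0 ?z0 ?q0.
rewrite (qp_refl n.+1 1); last by rewrite oner_eq0.
have -> : q / (z / q) = q / z * q by field; nz.
rewrite divr1 [P (q / z) n.+1]qpSl.
rewrite !qpS (binS n.+1) bin1 exprD exprNn expr_div_n.
rewrite /al /be !exprS.
have Hy1 : 1 - y * q ^+ n != 0 by apply: Hy; rewrite leqnSn.
have HPy : P y n != 0 by apply: qp_neq0 => i Hi; apply: Hy; rewrite ltnW // ltnW.
have Hyn' : 1 - y * (q * q ^+ n) != 0 by rewrite -exprS.
field; nz.
Qed.

Definition rh m j := (-1) ^+ j * q ^+ 'C(j.+1, 2) / q ^+ (j * m) * (P q m / (P q j * P q (m - j))).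
Definition phi m x := P q m * x ^+ m / P x m.+1.

Lemma rh0 : rh 0 0 = 1.
Proof. rewrite /rh !qp0 expr0 (_ : 'C(1, 2) = 0%N) // !expr0 mul1r; field; nz. Qed.

Lemma rh_succ m j : (j <= m)%N -> rh m.+1 j = rh m j * (1 - q ^+ m.+1) / (q ^+ j - q ^+ m.+1).
Proof.
move=> Hj; rewrite /rh subSn // [P q m.+1]qpS qpS mulnS exprD.
have Hm : q ^+ m = q ^+ (m - j) * q ^+ j by rewrite -exprD subnK.
rewrite !exprS Hm.
have H1 : q ^+ j - q * (q ^+ (m - j) * q ^+ j) != 0.
  have -> : q ^+ j - q * (q ^+ (m - j) * q ^+ j) = q ^+ j * (1 - q ^+ (m - j).+1) by rewrite exprS; ring.
  apply: mulf_neq0; nz.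
move: (m - j)%N H1 => k H1.
field; nz.
Qed.

Lemma L1_term m j x : (j <= m)%N -> 1 - x * q ^+ j != 0 -> 1 - x * q ^+ m.+1 != 0 ->
  rh m.+1 j / (1 - x * q ^+ j) =
  rh m j * ((1 - q ^+ m.+1) * x / (1 - q ^+ m.+1 * x) / (1 - x * q ^+ j)
           - (1 - q ^+ m.+1) / ((1 - x * q ^+ m.+1) * q ^+ m.+1) / (1 - (q ^+ m.+1)^-1 * q ^+ j)).
Proof.
move=> Hj Hx1 Hx2; rewrite rh_succ //.
have H1 : q ^+ j - q ^+ m.+1 != 0.
  have Hm : q ^+ m.+1 = q ^+ (m - j).+1 * q ^+ j by rewrite -exprD addSn subnK.
  rewrite Hm -{1}(mul1r (q ^+ j)) -mulrBl; apply: mulf_neq0; nz.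
have E : 1 - (q ^+ m.+1)^-1 * q ^+ j = (q ^+ m.+1 - q ^+ j) / q ^+ m.+1.
  field; nz.
rewrite E.
have H2 : q ^+ m.+1 - q ^+ j != 0 by rewrite -oppr_eq0 opprB.
have H3 : 1 - q ^+ m.+1 * x != 0 by rewrite mulrC.
have H4 := qX0 m.+1.
move: (q ^+ m.+1) (q ^+ j) (rh m j) H1 H2 H3 H4 Hx1 Hx2 => c u r H1 H2 H3 H4 Hx1 Hx2.
field; nz.
Qed.

Lemma L1 m : forall x, (forall k, (k <= m)%N -> 1 - x * q ^+ k != 0) ->
  \sum_(j < m.+1) rh m j / (1 - x * q ^+ j) = phi m x.
Proof.
elim: m => [|m IH] x Hx.
  have H0 := Hx 0%N isT; rewrite expr0 mulr1 in H0.
  rewrite big_ord1 rh0 /phi !qp0 qpS qp0 !expr0 mulr1; field; nz.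
rewrite big_ord_recr /=.
set x' := (q ^+ m.+1)^-1.
set al := (1 - q ^+ m.+1) * x / (1 - q ^+ m.+1 * x).
set be := (1 - q ^+ m.+1) / ((1 - x * q ^+ m.+1) * q ^+ m.+1).
have Hxn : 1 - x * q ^+ m.+1 != 0 by apply: Hx.
have step : \sum_(j < m.+1) rh m.+1 j / (1 - x * q ^+ j) =
   al * (\sum_(j < m.+1) rh m j / (1 - x * q ^+ j)) - be * (\sum_(j < m.+1) rh m j / (1 - x' * q ^+ j)).
  rewrite !mulr_sumr -sumrB; apply: eq_bigr => j _.
  rewrite L1_term //; first by rewrite /al /be /x'; ring.
  - by rewrite -ltnS ltn_ord.
  - apply: Hx; by rewrite -ltnS ltnW // ltnS ltn_ord.
rewrite step IH; last by move=> k Hk; apply: Hx; rewrite ltnW.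
rewrite IH; last first.
  move=> k Hk; rewrite /x' mulrC; apply: nz_qq; by rewrite neq_ltn ltnS Hk.
rewrite /phi /rh subnn qp0.
have -> : x' = 1 / q ^+ m.+1 by rewrite /x' div1r.
rewrite (qp_refl m.+1 1); last by rewrite oner_eq0.
rewrite divr1 expr_div_n expr1n -exprM.
rewrite [(m.+1 * m.+1)%N]mulnS exprD.
rewrite (binS m.+1) bin1 exprD.
rewrite !qpS /al /be !exprS.
have Hx1 : 1 - x * q ^+ m != 0 by apply: Hx; rewrite leqnSn.
have HPx : P x m != 0 by apply: qp_neq0 => i Hi; apply: Hx; rewrite ltnW // ltnW.
have Hxn' : 1 - x * (q * q ^+ m) != 0 by rewrite -exprS.
have Hxn'' : 1 - q * q ^+ m * x != 0 by rewrite mulrC.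
rewrite -signr_odd; case: (odd m); rewrite ?expr0 ?expr1; field; nz.
Qed.

Definition Hs n := \sum_(1 <= k < n.+1) q ^+ k / ((1 - z * q ^+ k.-1) * (1 - q ^+ k)).
Definition Ss n := \sum_(1 <= k < n.+1) wh n k / (1 - q ^+ k).

Lemma L3_term n k : (0 < k)%N -> (k <= n)%N ->
  wh n.+1 k / (1 - q ^+ k) = wh n k / (1 - q ^+ k)
     - (q - z) / (q * (1 - z * q ^+ n)) * (wh n k / (1 - (q ^+ n.+1)^-1 * q ^+ k)).
Proof.
move=> Hk Hkn; rewrite wh_succ //.
have Hn : q ^+ n = q ^+ (n - k) * q ^+ k by rewrite -exprD subnK.
have E : 1 - (q ^+ n.+1)^-1 * q ^+ k = (q ^+ (n - k) * q - 1) / (q ^+ (n - k) * q).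
  rewrite exprS Hn; field; nz.
rewrite E.
have H1 : q ^+ (n - k) * q - 1 != 0.
  by rewrite -exprSr -oppr_eq0 opprB nz_q.
have H2 : 1 - q ^+ k != 0 by rewrite nz_q.
rewrite !exprS Hn.
move: (n - k)%N (wh n k) H1 => e w H1.
field; nz.
Qed.

Lemma L3 n : Ss n = - (1 - z * q^-1) * Hs n.
Proof.
elim: n => [|n IH].
  by rewrite /Ss /Hs !big_geq // mulr0.
have Hs1 : Hs n.+1 = Hs n + q ^+ n.+1 / ((1 - z * q ^+ n) * (1 - q ^+ n.+1)).
  by rewrite /Hs big_nat_recr.
rewrite Hs1.
rewrite /Ss big_nat_recr //=.
set y' := (q ^+ n.+1)^-1.
set ga := (q - z) / (q * (1 - z * q ^+ n)).
have step : \sum_(1 <= k < n.+1) wh n.+1 k / (1 - q ^+ k) =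
   Ss n - ga * (\sum_(1 <= k < n.+1) wh n k / (1 - y' * q ^+ k)).
  rewrite /Ss mulr_sumr -sumrB; apply: eq_big_nat => k /andP [Hk1 Hk2].
  rewrite L3_term //; by rewrite -ltnS.
rewrite step IH.
have HL2 : \sum_(0 <= i < n.+1) wh n i / (1 - y' * q ^+ i) = Psi n y'.
  rewrite big_mkord; apply: L2 => k Hk; rewrite /y' mulrC; apply: nz_qq; by rewrite neq_ltn ltnS Hk.
rewrite (big_ltn (ltn0Sn n)) /= wh0 expr0 mulr1 in HL2.
have -> : \sum_(1 <= k < n.+1) wh n k / (1 - y' * q ^+ k) = Psi n y' - 1 / (1 - y').
  by rewrite -HL2 addrC addKr.
rewrite /Psi /wh subnn !qp0.
have -> : z * y' = (z / q) / q ^+ n by rewrite /y' exprS; field; nz.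
have -> : y' = 1 / q ^+ n.+1 by rewrite /y' div1r.
rewrite (qp_refl n (z / q)); last by rewrite mulf_neq0 ?invr_eq0 ?z0 ?q0.
rewrite (qp_refl n.+1 1); last by rewrite oner_eq0.
have -> : q / (z / q) = q / z * q by field; nz.
rewrite divr1 [P (q / z) n.+1]qpSl.
rewrite !qpS (binS n.+1) bin1 exprD exprNn expr_div_n.
rewrite /ga !exprS.
have Hq1 : 1 - 1 / (q * q ^+ n) != 0 by have := nz_qq 0 n.+1 isT; rewrite expr0 exprS.
rewrite -signr_odd; case: (odd n); rewrite ?expr0 ?expr1; field; nz.
Qed.

Definition am m := P z m / P q m.
Definition fT n m j := P (q / z) j * z ^+ j * (q ^+ n) ^+ j / P (q * (q * q ^+ n)) j * (P z (m - j) / P q (m - j)).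

Lemma fT_term n m j : (1 <= j <= m)%N ->
  (1 - q ^+ m.+2 * q ^+ n) * fT n m.+1 j - z * q ^+ n * (1 - q ^+ m.+1) * fT n m j =
  (- (1 - q ^+ j.+2 * q ^+ n) * fT n m.+1 j.+1) - (- (1 - q ^+ j.+1 * q ^+ n) * fT n m.+1 j).
Proof.
case/andP=> Hj1 Hjm.
rewrite /fT subSS (subSn Hjm).
have Hm : q ^+ m = q ^+ j * q ^+ (m - j) by rewrite -exprD subnKC.
have HPX : P (q * (q * q ^+ n)) j != 0 by rewrite -!exprS; apply: qpqk_neq0.
have H1 : 1 - q * (q * q ^+ n) * q ^+ j != 0 by rewrite -!exprS -exprD; apply: nz_q.
rewrite !qpS !exprS Hm ?exprS.
move: (m - j)%N (P (q * (q * q ^+ n)) j) HPX H1 => k PX HPX H1.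
field; nz.
Qed.

Definition kap n := (q - z) * q ^+ n / (1 - z * q ^+ n).
Definition eT n m j := kap n * (-1) ^+ j * q ^+ 'C(j.+1, 2) / q ^+ (j * m) * (P z m / P q (m - j))
   * (P (z * q ^+ n) j / (P z j * P (q * (q * q ^+ n)) j)).
Definition Ge n m j := - (1 - q ^+ j.+1 * q ^+ n) * q ^+ (m.+1 - j) * (1 - z * q ^+ j.-1) / (1 - z * q ^+ m)
   * eT n m.+1 j.

Lemma eT_term n m i : (i.+1 <= m)%N ->
  (1 - q ^+ m.+2 * q ^+ n) * eT n m.+1 i.+1 - z * q ^+ n * (1 - q ^+ m.+1) * eT n m i.+1 =
  Ge n m i.+2 - Ge n m i.+1.
Proof.
move=> Hjm.
rewrite /Ge /eT (subSn Hjm) !subSS.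
have E1 : q ^+ (i.+1 * m.+1) = q ^+ (i.+1 * m) * q ^+ i.+1 by rewrite mulnS exprD mulrC.
have E2 : q ^+ (i.+2 * m.+1) = q ^+ (i.+1 * m) * q ^+ i.+1 * q ^+ m.+1.
  by rewrite mulSn mulnS !exprD mulrCA mulrA mulrC mulrA.
have E3 : q ^+ 'C(i.+3, 2) = q ^+ 'C(i.+2, 2) * q ^+ i.+2 by rewrite (binS i.+2) bin1 exprD.
rewrite E1 E2 E3.
have Hm : q ^+ m = q ^+ i.+1 * q ^+ (m - i.+1) by rewrite -exprD subnKC.
have HPX : P (q * (q * q ^+ n)) i.+1 != 0 by rewrite -!exprS; apply: qpqk_neq0.
have H1 : 1 - q * (q * q ^+ n) * q ^+ i.+1 != 0 by rewrite -!exprS -exprD; apply: nz_q.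
have HPzX : P (z * q ^+ n) i.+1 != 0 by apply: qpzqk_neq0.
have H2 : 1 - z * q ^+ n * q ^+ i.+1 != 0 by rewrite -mulrA -exprD; apply: nz_zq.
have H3 : 1 - z * q ^+ m != 0 by apply: nz_zq.
have H4 : 1 - z * (q * (q ^+ i.+1 * q ^+ (m - i.+1))) != 0 by rewrite -exprD -exprS; apply: nz_zq.
have H5 : 1 - z * (q ^+ i.+1 * q ^+ (m - i.+1)) != 0 by rewrite -exprD; apply: nz_zq.
rewrite !qpS !exprS Hm ?exprS.
rewrite !exprS in H1 H2 H4 H5.
move: (m - i.+1)%N (P (q * (q * q ^+ n)) i.+1) HPX H1 (P (z * q ^+ n) i.+1) HPzX H2 H3 H4 H5
  (q ^+ (i.+1 * m)) (qX0 (i.+1 * m)) (q ^+ 'C(i.+2, 2)) (qX0 'C(i.+2,2))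
  => k PX HPX H1 PzX HPzX H2 H3 H4 H5 E HE C HC.
rewrite /kap.
field; nz.
Qed.

Lemma recF n m : (1 - q ^+ m.+2 * q ^+ n) * \sum_(1 <= j < m.+2) fT n m.+1 j
   - z * q ^+ n * (1 - q ^+ m.+1) * \sum_(1 <= j < m.+1) fT n m j = q ^+ n * (z - q) * am m.
Proof.
set Gf := fun j => - (1 - q ^+ j.+1 * q ^+ n) * fT n m.+1 j.
have T : \sum_(1 <= j < m.+1) ((1 - q ^+ m.+2 * q ^+ n) * fT n m.+1 j
           - z * q ^+ n * (1 - q ^+ m.+1) * fT n m j) = Gf m.+1 - Gf 1%N.
  apply: telescope_sumr_eq => // j Hj; rewrite fT_term //.
rewrite sumrB -!mulr_sumr in T.
rewrite big_nat_recr //= mulrDr addrAC T /Gf /fT !subnn subn1 /= !qp0 !expr1.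
rewrite ![P _ 1]qpS !qp0 !expr0 !mulr1 !mul1r expr2 /am.
have H1 : 1 - q * (q * q ^+ n) != 0 by rewrite -!exprS; apply: nz_q.
field; nz.
Qed.

Lemma recE n m : (1 - q ^+ m.+2 * q ^+ n) * \sum_(1 <= j < m.+2) eT n m.+1 j
   - z * q ^+ n * (1 - q ^+ m.+1) * \sum_(1 <= j < m.+1) eT n m j = q ^+ n * (z - q) * am m.
Proof.
have T : \sum_(1 <= j < m.+1) ((1 - q ^+ m.+2 * q ^+ n) * eT n m.+1 j
           - z * q ^+ n * (1 - q ^+ m.+1) * eT n m j) = Ge n m m.+1 - Ge n m 1%N.
  apply: telescope_sumr_eq => // -[|i] /andP [Hi1 Hi2] //; rewrite eT_term //.
rewrite sumrB -!mulr_sumr in T.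
rewrite big_nat_recr //= mulrDr addrAC T /Ge subnn subn1 /= expr0 !mulr1.
rewrite [eT n m.+1 1]/eT subn1 binn !mul1n expr1 ![P _ 1]qpS !qp0 !expr0 !mulr1 !mul1r [P z m.+1]qpS /am /kap.
have H1 : 1 - q * (q * q ^+ n) != 0 by rewrite -!exprS; apply: nz_q.
rewrite !exprS.
field; nz.
Qed.

Lemma AU n m : \sum_(1 <= j < m.+1) eT n m j = \sum_(1 <= j < m.+1) fT n m j.
Proof.
elim: m => [|m IH]; first by rewrite !big_geq.
have HE := recE n m; have HF := recF n m.
have Hc : 1 - q ^+ m.+2 * q ^+ n != 0 by rewrite -exprD; apply: nz_q.
rewrite IH in HE.
apply: (mulfI Hc).
apply: (addIr (- (z * q ^+ n * (1 - q ^+ m.+1) * \sum_(1 <= j < m.+1) fT n m j))).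
by rewrite HF HE.
Qed.

Lemma qpD2 x a b : P x a * P (x * q ^+ a) b = P x b * P (x * q ^+ b) a.
Proof. by rewrite -!qpD addnC. Qed.

Lemma Psi_qj n j : (0 < j)%N -> Psi n (q ^+ j) = P (z * q ^+ n) j * P q j / (P z j * (1 - q ^+ j) * P (q * q ^+ n) j).
Proof.
move=> Hj.
have E1 : P (z * q ^+ j) n = P z n * P (z * q ^+ n) j / P z j.
  have := qpD2 z j n => E; apply: (mulfI (qpz_neq0 j)); rewrite E; field; nz.
have E2 : P (q * q ^+ j) n = P q n * P (q * q ^+ n) j / P q j.
  have := qpD2 q j n => E; apply: (mulfI (qpq_neq0 j)); rewrite E; field; nz.
have HPqn : P (q * q ^+ n) j != 0 by rewrite -exprS; apply: qpqk_neq0.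
rewrite /Psi qpSl (mulrC (q ^+ j) q) E1 E2.
field; nz.
Qed.

Lemma phi_qk n k : (0 < k)%N -> phi n (q ^+ k) = (q ^+ n) ^+ k * P q k / ((1 - q ^+ k) * P (q * q ^+ n) k).
Proof.
move=> Hk.
have E2 : P (q * q ^+ k) n = P q n * P (q * q ^+ n) k / P q k.
  have := qpD2 q k n => E; apply: (mulfI (qpq_neq0 k)); rewrite E; field; nz.
have HPqn : P (q * q ^+ n) k != 0 by rewrite -exprS; apply: qpqk_neq0.
rewrite /phi qpSl (mulrC (q ^+ k) q) E2 exprAC.
field; nz.
Qed.

Lemma qp_shift x j : 1 - x != 0 -> P (x * q) j = P x j * (1 - x * q ^+ j) / (1 - x).
Proof.
move=> Hx; have E1 := qpSl x j; rewrite qpS in E1.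
apply: (mulfI Hx); rewrite -E1; field; exact: Hx.
Qed.

Lemma termPsi n m j : (0 < j)%N ->
  rh m j * (Psi n.+1 (q ^+ j) - Psi n (q ^+ j)) = - (P q m / P z m) / (1 - q * q ^+ n) * eT n m j.
Proof.
move=> Hj; rewrite !Psi_qj // /rh /eT /kap.
have -> : z * q ^+ n.+1 = (z * q ^+ n) * q by rewrite exprSr mulrA.
have -> : q * q ^+ n.+1 = (q * q ^+ n) * q by rewrite exprSr mulrA.
rewrite !qp_shift; [|nz|nz].
have -> : q * (q * q ^+ n) = (q * q ^+ n) * q by rewrite mulrC.
rewrite qp_shift; last nz.
have HPqn : P (q * q ^+ n) j != 0 by rewrite -exprS; apply: qpqk_neq0.
field; nz.
Qed.

Lemma termPhi n m k : (0 < k)%N ->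
  wh m k * (phi n.+1 (q ^+ k) - phi n (q ^+ k)) = - (P q m / P z m) / (1 - q * q ^+ n) * fT n m k.
Proof.
move=> Hk; rewrite !phi_qk // /wh /fT.
have -> : q * q ^+ n.+1 = (q * q ^+ n) * q by rewrite exprSr mulrA.
rewrite qp_shift; last nz.
have -> : q * (q * q ^+ n) = (q * q ^+ n) * q by rewrite mulrC.
rewrite qp_shift; last nz.
rewrite exprSr exprMn.
have HPqn : P (q * q ^+ n) k != 0 by rewrite -exprS; apply: qpqk_neq0.
field; nz.
Qed.

Definition Zr n m := \sum_(1 <= j < m.+1) rh m j * (Psi n (q ^+ j) - 1 / (1 - q ^+ j)).
Definition Zw m n := \sum_(1 <= k < m.+1) wh m k * (phi n (q ^+ k) - 1 / (1 - q ^+ k)).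

Lemma ZrZw n m : Zr n m = Zw m n.
Proof.
elim: n => [|n IH].
  rewrite /Zr /Zw !big1_seq // => j /andP [_ Hj]; rewrite mem_index_iota in Hj;
  case/andP: Hj => Hj _.
  - by rewrite /phi !qp0 qpS qp0 !expr0 !mul1r mulr1 subrr mulr0.
  - by rewrite /Psi !qp0 qpS qp0 !expr0 !mul1r !mulr1 subrr mulr0.
have E1 : Zr n.+1 m = Zr n m + \sum_(1 <= j < m.+1) rh m j * (Psi n.+1 (q ^+ j) - Psi n (q ^+ j)).
  rewrite /Zr -big_split /=; apply: eq_bigr => j _; ring.
have E2 : Zw m n.+1 = Zw m n + \sum_(1 <= k < m.+1) wh m k * (phi n.+1 (q ^+ k) - phi n (q ^+ k)).
  rewrite /Zw -big_split /=; apply: eq_bigr => k _; ring.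
rewrite E1 E2 IH; congr (_ + _).
rewrite (eq_big_nat _ _ (fun j Hj => termPsi n m j (proj1 (andP Hj)))).
rewrite (eq_big_nat _ _ (fun j Hj => termPhi n m j (proj1 (andP Hj)))).
by rewrite -!mulr_sumr AU.
Qed.

Lemma rh_0 m : rh m 0 = 1.
Proof. rewrite /rh subn0 (_ : 'C(1, 2) = 0%N) // mul0n !expr0 qp0; field; nz. Qed.

Lemma phi_sub m k : (0 < k)%N ->
  phi m (q ^+ k) - 1 / (1 - q ^+ k) = \sum_(1 <= j < m.+1) rh m j / (1 - q ^+ k * q ^+ j).
Proof.
move=> Hk.
have H : forall i, (i <= m)%N -> 1 - q ^+ k * q ^+ i != 0.
  move=> i _; rewrite -exprD; apply: nz_q; by rewrite addn_gt0 Hk.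
rewrite -(@L1 m (q ^+ k) H) -(big_mkord (fun _ => true) (fun j => rh m j / (1 - q ^+ k * q ^+ j))) (big_ltn (ltn0Sn m)) rh_0 expr0 mulr1.
by rewrite addrC addKr.
Qed.

Lemma Psi_sub n j : (0 < j)%N ->
  Psi n (q ^+ j) - 1 / (1 - q ^+ j) = \sum_(1 <= k < n.+1) wh n k / (1 - q ^+ j * q ^+ k).
Proof.
move=> Hj.
have H : forall i, (i <= n)%N -> 1 - q ^+ j * q ^+ i != 0.
  move=> i _; rewrite -exprD; apply: nz_q; by rewrite addn_gt0 Hj.
rewrite -(@L2 n (q ^+ j) H) -(big_mkord (fun _ => true) (fun i => wh n i / (1 - q ^+ j * q ^+ i))) (big_ltn (ltn0Sn n)) wh0 expr0 mulr1.
by rewrite addrC addKr.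
Qed.

Lemma bridge n m : Zw n m = Zr n m.
Proof.
rewrite /Zw /Zr.
transitivity (\sum_(1 <= k < n.+1) \sum_(1 <= j < m.+1) wh n k * rh m j / (1 - q ^+ k * q ^+ j)).
  apply: eq_big_nat => k /andP [Hk _]; rewrite phi_sub // mulr_sumr; apply: eq_bigr => j _.
  by rewrite mulrA.
rewrite exchange_big /=; apply: eq_big_nat => j /andP [Hj _]; rewrite Psi_sub // mulr_sumr.
apply: eq_bigr => k _; rewrite (mulrC (q ^+ j)); field; rewrite -exprD; apply: nz_q; by rewrite addn_gt0 Hj orbT.
Qed.

Lemma Zsym n m : Zw n m = Zw m n.
Proof. by rewrite bridge ZrZw. Qed.

Lemma termT n m k : (0 < k)%N ->
  P (q / z) k * P z (n - k) * P z m / (P q k * P q (n - k) * P (q ^+ k) m.+1) * q ^+ (m * k) * z ^+ k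
  = P z n * P z m / (P q n * P q m) * (wh n k * phi m (q ^+ k)).
Proof.
move=> Hk; rewrite /wh /phi -exprM mulnC.
have H1 : P (q ^+ k) m.+1 != 0 by apply: qpqk_neq0.
field; nz.
Qed.

Lemma sum_split n m : \sum_(1 <= k < n.+1) wh n k * phi m (q ^+ k) = Zw n m + Ss n.
Proof.
rewrite /Zw /Ss -big_split /=; apply: eq_bigr => k _.
by rewrite mulrBr -mulrA mul1r subrK.
Qed.

Theorem main_abs (m n : nat) :
  (\sum_(1 <= k < n.+1)
      P (q / z) k * P z (n - k) * P z m
      / (P q k * P q (n - k) * P (q ^+ k) m.+1)
      * q ^+ (m * k) * z ^+ k)
  - (\sum_(1 <= k < m.+1)
      P (q / z) k * P z (m - k) * P z n
      / (P q k * P q (m - k) * P (q ^+ k) n.+1)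
      * q ^+ (n * k) * z ^+ k)
  = (1 - z * q^-1) * P z m * P z n
      / (P q m * P q n)
    * ((\sum_(1 <= k < m.+1)
          q ^+ k / ((1 - z * q ^+ k.-1) * (1 - q ^+ k)))
       - (\sum_(1 <= k < n.+1)
          q ^+ k / ((1 - z * q ^+ k.-1) * (1 - q ^+ k)))).
Proof.
rewrite (eq_big_nat _ _ (fun k Hk => termT n m k (proj1 (andP Hk)))).
rewrite (eq_big_nat _ _ (fun k Hk => termT m n k (proj1 (andP Hk)))).
rewrite -!mulr_sumr !sum_split (Zsym n m) !L3.
rewrite -/(Hs m) -/(Hs n).
field; nz.
Qed.
End QId.


Lemma Hmon_qz : forall a b c d : nat, qv ^+ a * zv ^+ b = qv ^+ c * zv ^+ d -> a = c /\ b = d.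
Proof.
move=> a b c d; rewrite /qv /zv -!rmorphXn -!rmorphM => /eqP; rewrite tofrac_eq => /eqP E.
have Ea := congr1 (fun p : {poly {poly rat}} => p`_a) E.
have Ec := congr1 (fun p : {poly {poly rat}} => p`_c) E.
rewrite /= !coefXnM !coefC !ltnn !subnn /= in Ea Ec.
have Hac : a = c.
  case: (ltngtP a c) => // H.
  - move: Ea; rewrite H /= => Ea.
    by have := congr1 (fun p : {poly rat} => size p) Ea; rewrite size_polyXn size_poly0.
  - move: Ec; rewrite H /= => Ec.
    by have := congr1 (fun p : {poly rat} => size p) Ec; rewrite size_polyXn size_poly0.
subst c; split=> //.
move: Ea; rewrite ltnn subnn /= => Ea.
by have := congr1 (fun p : {poly rat} => size p) Ea; rewrite !size_polyXn => -[].
Qed.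

Theorem corollary6p2 (m n : nat) :
  (\sum_(1 <= k < n.+1)
      qpoch (qv / zv) qv k * qpoch zv qv (n - k) * qpoch zv qv m
      / (qpoch qv qv k * qpoch qv qv (n - k) * qpoch (qv ^+ k) qv m.+1)
      * qv ^+ (m * k) * zv ^+ k)
  - (\sum_(1 <= k < m.+1)
      qpoch (qv / zv) qv k * qpoch zv qv (m - k) * qpoch zv qv n
      / (qpoch qv qv k * qpoch qv qv (m - k) * qpoch (qv ^+ k) qv n.+1)
      * qv ^+ (n * k) * zv ^+ k)
  = (1 - zv * qv^-1) * qpoch zv qv m * qpoch zv qv n
      / (qpoch qv qv m * qpoch qv qv n)
    * ((\sum_(1 <= k < m.+1)
          qv ^+ k / ((1 - zv * qv ^+ k.-1) * (1 - qv ^+ k)))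
       - (\sum_(1 <= k < n.+1)
          qv ^+ k / ((1 - zv * qv ^+ k.-1) * (1 - qv ^+ k)))).
Proof. exact: (@main_abs _ qv zv Hmon_qz m n). Qed.
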